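(* There exist a first-order theory $T$ and a definable MER $\mathcal E$ for $T$ such that $\mathcal E$ is yclept but not ydlept.
   Context: Throughout, $T$ is a first-order (classical two-valued) theory in a language $L$, and ''definable'' means definable by an $L$-formula without parameters. For a set $\Omega$ of universes for the sorts of $L$, $\mathrm{Mod}_\Omega(T)$ denotes the set of models of $T$ whose universe (in every sort) is given by $\Omega$. The pair language $(L,=,L')$ has the same sorts as $L$ and, for each non-logical symbol $S$ of $L$, two symbols $S$ and $S'$ of the same type; for $L$-structures $M,N$ with the same universe, $(M,N)$ is the $(L,=,L')$-structure interpreting $S$ as $S^M$ and $S'$ as $S^N$. A model equivalence relation (MER) $\mathcal E$ for $T$ is given by a set $\tau$ of $(L,=,L')$-sentences such that for every $\Omega$ the relation $M\,\mathcal E\,N\iff (M,N)\models\tau$ is an equivalence relation on $\mathrm{Mod}_\Omega(T)$; $\mathcal E$ is a definable MER if $\tau$ can be taken finite. A CL-definable predicate (a parameter-free formula of continuous logic over models of $T$) on a finite product $X$ of sorts is a continuous function $F$ from the Stone space $S_X(T)$ of complete types of $T$ in variables of sort $X$ into a compact subset of some $\mathbb R^k$; in $M\models T$ it is interpreted by $F^M(a)=F(\mathrm{tp}(a))$. A MER $\mathcal E$ is yclept if there is a set $\mathcal R$ of CL-definable predicates such that for all $\Omega$ and all $M,N\in\mathrm{Mod}_\Omega(T)$: $M\,\mathcal E\,N$ iff $F^M=F^N$ for every $F\in\mathcal R$. It is ydlept if this holds with $\mathcal R$ a set of first-order $L$-formulas (sentences allowed, for which agreement means equal truth value). *)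

(* Defs.v *)
From Stdlib Require Import Reals List.
From Stdlib Require Vectors.Fin.
Open Scope R_scope.

Record lang : Type := Lang {
  sort : Type;
  fsym : Type;                      (* function symbols (constants = 0-ary) *)
  fargs : fsym -> list sort;
  fres : fsym -> sort;
  rsym : Type;
  rargs : rsym -> list sort }.

Arguments fargs {_} _.
Arguments fres {_} _.
Arguments rargs {_} _.

Inductive hlist {S : Type} (Om : S -> Type) : list S -> Type :=
| hnil : hlist Om nil
| hcons : forall s l, Om s -> hlist Om l -> hlist Om (s :: l).
Arguments hnil {S Om}.
Arguments hcons {S Om s l} _ _.

Section Syntax.
Variable L : lang.

(** variables are pairs (sort, index) *)
Inductive term : sort L -> Type :=
| tvar : forall s : sort L, nat -> term s
| tapp : forall f : fsym L, terms (fargs f) -> term (fres f)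
with terms : list (sort L) -> Type :=
| tnil : terms nil
| tcons : forall s l, term s -> terms l -> terms (s :: l).

Arguments tapp f ts.
Arguments tcons {s l} t ts.

Inductive formula : Type :=
| fEq : forall s, term s -> term s -> formula
| fRel : forall r : rsym L, terms (rargs r) -> formula
| fFalse : formula
| fNot : formula -> formula
| fAnd : formula -> formula -> formula
| fOr : formula -> formula -> formula
| fImp : formula -> formula -> formula
| fAll : sort L -> nat -> formula -> formula
| fEx : sort L -> nat -> formula -> formula.

Fixpoint tfree {s} (t : term s) (s' : sort L) (n : nat) : Prop :=
  match t with
  | tvar s0 m => s0 = s' /\ m = n
  | tapp f ts => tsfree ts s' n
  end
with tsfree {l} (ts : terms l) (s' : sort L) (n : nat) : Prop :=
  match ts with
  | tnil => False
  | tcons t ts => tfree t s' n \/ tsfree ts s' n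
  end.

Fixpoint ffree (phi : formula) (s : sort L) (n : nat) : Prop :=
  match phi with
  | fEq _ t u => tfree t s n \/ tfree u s n
  | fRel _ ts => tsfree ts s n
  | fFalse => False
  | fNot p => ffree p s n
  | fAnd p q | fOr p q | fImp p q => ffree p s n \/ ffree q s n
  | fAll s0 m p | fEx s0 m p => ffree p s n /\ ~ (s0 = s /\ m = n)
  end.

Definition sentence (phi : formula) : Prop := forall s n, ~ ffree phi s n.

Definition theory (T : formula -> Prop) : Prop := forall phi, T phi -> sentence phi.

Record structure (Om : sort L -> Type) : Type := Structure {
  sfun : forall f : fsym L, hlist Om (fargs f) -> Om (fres f);
  srel : forall r : rsym L, hlist Om (rargs r) -> Prop }.
Arguments sfun {Om} _ _ _.
Arguments srel {Om} _ _ _.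

Definition valuation (Om : sort L -> Type) := forall s : sort L, nat -> Om s.

Section Eval.
Variables (Om : sort L -> Type) (M : structure Om) (rho : valuation Om).
Fixpoint teval {s} (t : term s) : Om s :=
  match t in term s0 return Om s0 with
  | tvar s0 m => rho s0 m
  | tapp f ts => sfun M f (tseval ts)
  end
with tseval {l} (ts : terms l) : hlist Om l :=
  match ts in terms l0 return hlist Om l0 with
  | tnil => hnil
  | tcons t ts => hcons (teval t) (tseval ts)
  end.
End Eval.
Arguments teval {Om} M rho {s} t.
Arguments tseval {Om} M rho {l} ts.

Definition agree_except {Om} (rho rho' : valuation Om) (s : sort L) (n : nat) : Prop :=
  forall s' m, ~ (s' = s /\ m = n) -> rho' s' m = rho s' m.

Fixpoint sat {Om} (M : structure Om) (rho : valuation Om) (phi : formula) : Prop :=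
  match phi with
  | fEq _ t u => teval M rho t = teval M rho u
  | fRel r ts => srel M r (tseval M rho ts)
  | fFalse => False
  | fNot p => ~ sat M rho p
  | fAnd p q => sat M rho p /\ sat M rho q
  | fOr p q => sat M rho p \/ sat M rho q
  | fImp p q => sat M rho p -> sat M rho q
  | fAll s n p => forall rho', agree_except rho rho' s n -> sat M rho' p
  | fEx s n p => exists rho', agree_except rho rho' s n /\ sat M rho' p
  end.

Definition nonempty_univ (Om : sort L -> Type) : Prop := forall s, inhabited (Om s).

Definition is_model (T : formula -> Prop) {Om} (M : structure Om) : Prop :=
  nonempty_univ Om /\ forall phi, T phi -> forall rho, sat M rho phi.

(** a formula in the variables x_0 : X_0, ..., x_{n-1} : X_{n-1};
    the variable x_i is (X_i, i) *)
Definition in_vars (X : list (sort L)) (phi : formula) : Prop :=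
  forall s n, ffree phi s n -> nth_error X n = Some s.

(** the type of the tuple (rho (X_i) i)_i in M *)
Definition tp {Om} (M : structure Om) (X : list (sort L)) (rho : valuation Om)
  : formula -> Prop := fun phi => in_vars X phi /\ sat M rho phi.

(** p is an element of S_X(T): a maximal set of formulas in x consistent with
    T, i.e. (by completeness) the type of some tuple in some model of T *)
Definition complete_type (T : formula -> Prop) (X : list (sort L))
  (p : formula -> Prop) : Prop :=
  exists (Om : sort L -> Type) (M : structure Om) (rho : valuation Om),
    is_model T M /\ p = tp M X rho.

(** * CL-definable predicates: continuous maps S_X(T) -> R^k with image in a
    compact set.  Continuity is w.r.t. the Stone topology (basic opens [phi])
    and the product topology of R^k. *)
Definition CL_definable (T : formula -> Prop) (X : list (sort L)) (k : nat)
  (F : (formula -> Prop) -> Fin.t k -> R) : Prop :=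
  (forall p, complete_type T X p -> forall eps, 0 < eps ->
     exists phi, p phi /\
       forall q, complete_type T X q -> q phi ->
         forall j, Rabs (F q j - F p j) < eps)
  /\ (exists B, forall p, complete_type T X p -> forall j, Rabs (F p j) <= B).

End Syntax.

Arguments tvar {L} s n.
Arguments tapp {L} f ts.
Arguments tnil {L}.
Arguments tcons {L s l} t ts.
Arguments fEq {L s} t u.
Arguments fRel {L} r ts.
Arguments fFalse {L}.
Arguments fNot {L} _.
Arguments fAnd {L} _ _.
Arguments fOr {L} _ _.
Arguments fImp {L} _ _.
Arguments fAll {L} _ _ _.
Arguments fEx {L} _ _ _.
Arguments tfree {L s} t s' n.
Arguments tsfree {L l} ts s' n.
Arguments ffree {L} phi s n.
Arguments sentence {L} phi.
Arguments theory {L} T.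
Arguments structure {L} Om.
Arguments Structure {L Om} _ _.
Arguments sfun {L Om} _ _ _.
Arguments srel {L Om} _ _ _.
Arguments valuation {L} Om.
Arguments teval {L Om} M rho {s} t.
Arguments tseval {L Om} M rho {l} ts.
Arguments agree_except {L Om} rho rho' s n.
Arguments sat {L Om} M rho phi.
Arguments nonempty_univ {L} Om.
Arguments is_model {L} T {Om} M.
Arguments in_vars {L} X phi.
Arguments tp {L Om} M X rho _.
Arguments complete_type {L} T X p.
Arguments CL_definable {L} T X k F.

Definition pairL (L : lang) : lang :=
  Lang (sort L) (fsym L + fsym L)
       (fun f => match f with inl g => fargs g | inr g => fargs g end)
       (fun f => match f with inl g => fres g | inr g => fres g end)
       (rsym L + rsym L)
       (fun r => match r with inl g => rargs g | inr g => rargs g end).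

Definition pair_structure (L : lang) (Om : sort L -> Type)
  (M N : structure Om) : @structure (pairL L) Om :=
  @Structure (pairL L) Om
    (fun f => match f as f0 return
                hlist Om (fargs (l := pairL L) f0) -> Om (fres (l := pairL L) f0) with
              | inl g => fun a => sfun M g a
              | inr g => fun a => sfun N g a
              end)
    (fun r => match r as r0 return hlist Om (rargs (l := pairL L) r0) -> Prop with
              | inl g => fun a => srel M g a
              | inr g => fun a => srel N g a
              end).

Arguments pair_structure {L Om} M N.

Section MER.
Variables (L : lang) (T : formula L -> Prop) (tau : formula (pairL L) -> Prop).

Definition mer_rel {Om : sort L -> Type} (M N : structure Om) : Prop :=
  forall psi, tau psi -> forall rho, sat (pair_structure M N) rho psi.

Definition is_MER : Prop :=
  (forall psi, tau psi -> sentence psi) /\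
  forall Om : sort L -> Type, nonempty_univ Om ->
    (forall M : structure Om, is_model T M -> mer_rel M M) /\
    (forall M N : structure Om, is_model T M -> is_model T N ->
       mer_rel M N -> mer_rel N M) /\
    (forall M N P : structure Om, is_model T M -> is_model T N -> is_model T P ->
       mer_rel M N -> mer_rel N P -> mer_rel M P).

Definition yclept : Prop :=
  exists (I : Type) (X : I -> list (sort L)) (k : I -> nat)
         (F : forall i, (formula L -> Prop) -> Fin.t (k i) -> R),
    (forall i, CL_definable T (X i) (k i) (F i)) /\
    forall (Om : sort L -> Type) (M N : structure Om),
      is_model T M -> is_model T N ->
      (mer_rel M N <->
       forall i (rho : valuation Om) j,
         F i (tp M (X i) rho) j = F i (tp N (X i) rho) j).

Definition ydlept : Prop :=
  exists Rs : formula L -> Prop,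
    forall (Om : sort L -> Type) (M N : structure Om),
      is_model T M -> is_model T N ->
      (mer_rel M N <->
       forall phi, Rs phi -> forall rho : valuation Om, (sat M rho phi <-> sat N rho phi)).

End MER.

Arguments mer_rel {L} tau {Om} M N.
Arguments is_MER {L} T tau.
Arguments yclept {L} T tau.
Arguments ydlept {L} T tau.

(* Main.v *)
Require Import Defs.
From Stdlib Require Import Reals List Lia Lra ZArith Arith.
From Stdlib Require Import ClassicalEpsilon FunctionalExtensionality Classical.
Import ListNotations.

Module M_A.

Definition L : lang :=
  Lang unit Empty_set (fun f => match f with end) (fun f => match f with end)
       bool (fun r => if r then [tt; tt] else [tt]).

Definition hhd {S : Type} {Om : S -> Type} {s l} (h : @hlist S Om (s :: l)) : Om s :=
  match h in hlist _ l0 return match l0 with nil => unit | s0 :: _ => Om s0 end with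
  | hnil => tt
  | hcons x _ => x
  end.
Definition htl {S : Type} {Om : S -> Type} {s l} (h : @hlist S Om (s :: l)) : hlist Om l :=
  match h in hlist _ l0 return match l0 with nil => unit | _ :: l1 => hlist Om l1 end with
  | hnil => tt
  | hcons _ t => t
  end.

Section Gen.
Context {Om : unit -> Type}.

Definition SR (M : @structure L Om) (x y : Om tt) : Prop :=
  srel M true (hcons x (hcons y hnil)).
Definition PR (M : @structure L Om) (x : Om tt) : Prop :=
  srel M false (hcons x hnil).

Definition upd (rho : @valuation L Om) (n : nat) (x : Om tt) : @valuation L Om :=
  fun s m => if Nat.eqb m n then (match s as s0 return Om s0 with tt => x end) else rho s m.

Lemma upd_same (rho : @valuation L Om) n x : upd rho n x tt n = x.
Proof. unfold upd. rewrite Nat.eqb_refl. reflexivity. Qed.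
Lemma upd_other (rho : @valuation L Om) n x m : m <> n -> upd rho n x tt m = rho tt m.
Proof. intro H. unfold upd. apply Nat.eqb_neq in H. rewrite H. reflexivity. Qed.

Lemma agree_upd (rho : @valuation L Om) n x : agree_except rho (upd rho n x) tt n.
Proof. intros s' m H. destruct s'. unfold upd. destruct (Nat.eqb_spec m n); [subst; tauto|reflexivity]. Qed.

Lemma agree_eq (rho rho' : @valuation L Om) n : agree_except rho rho' tt n -> rho' = upd rho n (rho' tt n).
Proof.
  intro H. apply functional_extensionality_dep. intro s. destruct s.
  apply functional_extensionality. intro m. unfold upd.
  destruct (Nat.eqb_spec m n). subst; reflexivity.
  apply H. intros [_ E]; contradiction.
Qed.

Lemma all_upd (A : @valuation L Om -> Prop) (rho : @valuation L Om) n :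
  (forall rho' : @valuation L Om, agree_except rho rho' tt n -> A rho') <-> (forall x, A (upd rho n x)).
Proof.
  split; intros H.
  - intro x. apply H, agree_upd.
  - intros rho' Hr. rewrite (agree_eq _ _ _ Hr). apply H.
Qed.
Lemma ex_upd (A : @valuation L Om -> Prop) (rho : @valuation L Om) n :
  (exists rho' : @valuation L Om, agree_except rho rho' tt n /\ A rho') <-> (exists x, A (upd rho n x)).
Proof.
  split; intros [r H].
  - destruct H as [Hr HA]. exists (r tt n). rewrite <- (agree_eq _ _ _ Hr). exact HA.
  - exists (upd rho n r). split; [apply agree_upd|exact H].
Qed.
End Gen.

Section GenP.
Context {Om : unit -> Type}.
Definition updP (rho : @valuation (pairL L) Om) (n : nat) (x : Om tt) : @valuation (pairL L) Om :=
  fun s m => if Nat.eqb m n then (match s as s0 return Om s0 with tt => x end) else rho s m.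
Lemma agree_updP (rho : @valuation (pairL L) Om) n x : agree_except rho (updP rho n x) tt n.
Proof. intros s' m H. destruct s'. unfold updP. destruct (Nat.eqb_spec m n); [subst; tauto|reflexivity]. Qed.
Lemma agree_eqP (rho rho' : @valuation (pairL L) Om) n : agree_except rho rho' tt n -> rho' = updP rho n (rho' tt n).
Proof.
  intro H. apply functional_extensionality_dep. intro s. destruct s.
  apply functional_extensionality. intro m. unfold updP.
  destruct (Nat.eqb_spec m n). subst; reflexivity.
  apply H. intros [_ E]; contradiction.
Qed.
Lemma all_updP (A : @valuation (pairL L) Om -> Prop) (rho : @valuation (pairL L) Om) n :
  (forall rho' : @valuation (pairL L) Om, agree_except rho rho' tt n -> A rho') <-> (forall x, A (updP rho n x)).
Proof.
  split; intros H.
  - intro x. apply H, agree_updP.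
  - intros rho' Hr. rewrite (agree_eqP _ _ _ Hr). apply H.
Qed.
End GenP.

End M_A.
Import M_A.

Module M_B.

Definition v (n : nat) : term L tt := tvar (L:=L) tt n.
Definition Sf (a b : nat) : formula L := fRel (L:=L) true (tcons (v a) (tcons (v b) tnil)).
Definition Pf (a : nat) : formula L := fRel (L:=L) false (tcons (v a) tnil).

Definition vp (n : nat) : term (pairL L) tt := tvar (L:=pairL L) tt n.
Definition SM (a b : nat) : formula (pairL L) := fRel (L:=pairL L) (inl true) (tcons (vp a) (tcons (vp b) tnil)).
Definition SN (a b : nat) : formula (pairL L) := fRel (L:=pairL L) (inr true) (tcons (vp a) (tcons (vp b) tnil)).
Definition PM (a : nat) : formula (pairL L) := fRel (L:=pairL L) (inl false) (tcons (vp a) tnil).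
Definition PN (a : nat) : formula (pairL L) := fRel (L:=pairL L) (inr false) (tcons (vp a) tnil).
Definition fIff {L'} (a b : formula L') := fAnd (fImp a b) (fImp b a).
Definition Dd (a : nat) := fNot (fIff (PM a) (PN a)).

Definition Tot : formula L := fAll (L:=L) tt 0 (fEx (L:=L) tt 1 (Sf 0 1)).
Definition Fun : formula L := fAll (L:=L) tt 0 (fAll (L:=L) tt 1 (fAll (L:=L) tt 2
   (fImp (Sf 0 1) (fImp (Sf 0 2) (fEq (v 1) (v 2)))))).
Definition T : formula L -> Prop := fun phi => phi = Tot \/ phi = Fun.

Definition Seq : formula (pairL L) := fAll (L:=pairL L) tt 0 (fAll (L:=pairL L) tt 1 (fIff (SM 0 1) (SN 0 1))).
Definition R1 : formula (pairL L) := fAll (L:=pairL L) tt 0 (fAll (L:=pairL L) tt 1 (fImp (SM 0 1) (fImp (Dd 0) (Dd 1)))).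
Definition R2 : formula (pairL L) := fAll (L:=pairL L) tt 0 (fAll (L:=pairL L) tt 1 (fAll (L:=pairL L) tt 2
  (fImp (SM 0 1) (fImp (SM 1 2) (fImp (Dd 0) (fIff (PM 1) (PM 2))))))).
Definition R3 : formula (pairL L) := fAll (L:=pairL L) tt 0 (fAll (L:=pairL L) tt 1 (fAll (L:=pairL L) tt 2
  (fImp (SM 0 1) (fImp (SM 1 2) (fImp (fNot (Dd 0)) (fImp (Dd 1) (fIff (PM 1) (fNot (PM 2))))))))).
Definition tau : list (formula (pairL L)) := [Seq; R1; R2; R3].

Section Sem.
Context {Om : unit -> Type}.

Lemma sat_Tot (M : @structure L Om) rho : sat M rho Tot <-> forall x, exists y, SR M x y.
Proof.
  unfold Tot. simpl. rewrite all_upd. split; intros H x; specialize (H x).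
  - rewrite ex_upd in H. simpl in H. unfold upd in H; simpl in H. exact H.
  - rewrite ex_upd. simpl. unfold upd; simpl. exact H.
Qed.
End Sem.
Section Sem2.
Context {Om : unit -> Type}.
Variables (M N : @structure L Om).
Definition SeqS := forall x y, SR M x y <-> SR N x y.
Definition DS x := ~ (PR M x <-> PR N x).
Definition R1S := forall x y, SR M x y -> DS x -> DS y.
Definition R2S := forall x y z, SR M x y -> SR M y z -> DS x -> (PR M y <-> PR M z).
Definition R3S := forall x y z, SR M x y -> SR M y z -> ~ DS x -> DS y -> (PR M y <-> ~ PR M z).

Ltac unf := cbn [sat teval tseval pair_structure srel sfun fIff Dd SM SN PM PN vp] in *; unfold updP in *; cbn in *.

Lemma sat_Seq rho : sat (pair_structure M N) rho Seq <-> SeqS.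
Proof.
  unfold Seq, SeqS. cbn [sat]. setoid_rewrite all_updP. cbn [sat]. setoid_rewrite all_updP.
  unf. unfold SR. tauto.
Qed.
Lemma sat_R1 rho : sat (pair_structure M N) rho R1 <-> R1S.
Proof.
  unfold R1, R1S. cbn [sat]. setoid_rewrite all_updP. cbn [sat]. setoid_rewrite all_updP.
  unf. unfold SR, DS, PR. tauto.
Qed.
Lemma sat_R2 rho : sat (pair_structure M N) rho R2 <-> R2S.
Proof.
  unfold R2, R2S. cbn [sat]. setoid_rewrite all_updP. cbn [sat]. setoid_rewrite all_updP.
  cbn [sat]. setoid_rewrite all_updP.
  unf. unfold SR, DS, PR. tauto.
Qed.
Lemma sat_R3 rho : sat (pair_structure M N) rho R3 <-> R3S.
Proof.
  unfold R3, R3S. cbn [sat]. setoid_rewrite all_updP. cbn [sat]. setoid_rewrite all_updP.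
  cbn [sat]. setoid_rewrite all_updP.
  unf. unfold SR, DS, PR. tauto.
Qed.

Lemma tau_sem : (exists x : Om tt, True) ->
  (mer_rel (fun psi => In psi tau) M N <-> SeqS /\ R1S /\ R2S /\ R3S).
Proof.
  intros [x0 _]. pose (rho0 := (fun s _ => match s as s0 return Om s0 with tt => x0 end) : @valuation (pairL L) Om).
  unfold mer_rel. split.
  - intro H. split; [|split; [|split]].
    + apply (sat_Seq rho0). apply H. simpl; tauto.
    + apply (sat_R1 rho0). apply H. simpl; tauto.
    + apply (sat_R2 rho0). apply H. simpl; tauto.
    + apply (sat_R3 rho0). apply H. simpl; tauto.
  - intros (H1 & H2 & H3 & H4) psi Hin rho. simpl in Hin.
    destruct Hin as [<-|[<-|[<-|[<-|[]]]]].
    + apply sat_Seq; auto.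
    + apply sat_R1; auto.
    + apply sat_R2; auto.
    + apply sat_R3; auto.
Qed.
End Sem2.

Section Sem3.
Context {Om : unit -> Type}.
Lemma sat_Fun (M : @structure L Om) rho : sat M rho Fun <-> forall x y z, SR M x y -> SR M x z -> y = z.
Proof.
  unfold Fun. cbn [sat]. setoid_rewrite all_upd. cbn [sat]. setoid_rewrite all_upd.
  cbn [sat]. setoid_rewrite all_upd.
  cbn [sat teval tseval Sf v] in *; unfold upd in *; cbn in *. unfold SR. tauto.
Qed.
Lemma model_T (M : @structure L Om) : is_model T M <->
  (inhabited (Om tt) /\ (forall x, exists y, SR M x y) /\ (forall x y z, SR M x y -> SR M x z -> y = z)).
Proof.
  split.
  - intros [Hne HT]. destruct (Hne tt) as [x0]. 
    pose (rho0 := (fun s _ => match s as s0 return Om s0 with tt => x0 end) : @valuation L Om).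
    split; [constructor; exact x0|split].
    + apply (sat_Tot M rho0). apply HT. left; reflexivity.
    + apply (sat_Fun M rho0). apply HT. right; reflexivity.
  - intros (Hne & H1 & H2). split.
    + intro s. destruct s. exact Hne.
    + intros phi [->| ->] rho. apply sat_Tot; auto. apply sat_Fun; auto.
Qed.
End Sem3.

End M_B.
Import M_B.

From Coquelicot Require Import Coquelicot.
Unset Asymmetric Patterns.
Module M_C.
Local Open Scope R_scope.

Definition tm (a : nat -> bool) (n : nat) : R := (if a n then 1 else 0) * (/2)^(S n).
Definition val (a : nat -> bool) : R := Series (tm a).
Definition sh (a : nat -> bool) : nat -> bool := fun n => a (S n).

Lemma geo_is : is_series (fun n => (/2)^(S n)) 1.
Proof.
  assert (H := is_series_geom (/2)). assert (Rabs (/2) < 1) by (rewrite Rabs_pos_eq; lra).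
  specialize (H H0). apply (is_series_scal_l (/2)) in H.
  replace 1 with (scal (/2) (/ (1 - /2))).
  eapply is_series_ext; [|exact H]. intro n. simpl. reflexivity.
  unfold scal; simpl. unfold mult; simpl. field.
Qed.
Lemma geo_ex : ex_series (fun n => (/2)^(S n)).
Proof. eexists; apply geo_is. Qed.

Lemma pow2_pos n : 0 < (/2)^n.
Proof. apply pow_lt; lra. Qed.

Lemma tm_bnd a n : 0 <= tm a n <= (/2)^(S n).
Proof. unfold tm. pose proof (pow2_pos (S n)). destruct (a n); lra. Qed.

Lemma val_ex a : ex_series (tm a).
Proof.
  apply (ex_series_le (tm a) (fun n => (/2)^(S n))); [|apply geo_ex].
  intro n. unfold norm; simpl. unfold abs; simpl. rewrite Rabs_pos_eq; apply tm_bnd.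
Qed.

Lemma val_eq a : val a = (if a 0%nat then 1 else 0) / 2 + val (sh a) / 2.
Proof.
  unfold val. rewrite Series_incr_1 by apply val_ex.
  replace (fun k => tm a (S k)) with (fun k => /2 * tm (sh a) k).
  rewrite Series_scal_l. unfold tm at 1. simpl. field.
  apply FunctionalExtensionality.functional_extensionality. intro k. unfold tm, sh. simpl. ring.
Qed.

Lemma val_bnd a : 0 <= val a <= 1.
Proof.
  split.
  - assert (Z0 : Series (fun _ : nat => 0) = 0).
    { rewrite (Series_ext _ (fun n => 0 * (/2)^(S n))) by (intro; ring).
      rewrite Series_scal_l. ring. }
    rewrite <- Z0. unfold val.
    apply Series_le; [intro n; split; [lra|apply tm_bnd]|apply val_ex].
  - unfold val. rewrite <- (is_series_unique _ 1 geo_is).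
    apply Series_le; [intro n; apply tm_bnd|apply geo_ex].
Qed.

Lemma val_compl a : val a + val (fun n => negb (a n)) = 1.
Proof.
  unfold val. rewrite <- Series_plus by apply val_ex.
  apply is_series_unique. eapply is_series_ext; [|exact geo_is].
  intro n. unfold tm. destruct (a n); simpl; ring.
Qed.

Lemma val_close N : forall a b, (forall n, (n < N)%nat -> a n = b n) -> Rabs (val a - val b) <= (/2)^N.
Proof.
  induction N; intros a b H.
  - simpl. pose proof (val_bnd a). pose proof (val_bnd b). apply Rabs_le. lra.
  - rewrite (val_eq a), (val_eq b). rewrite (H 0%nat) by lia.
    assert (Hs := IHN (sh a) (sh b) (fun n Hn => H (S n) ltac:(lia))).
    set (c := if b 0%nat then 1 else 0).
    replace (c / 2 + val (sh a) / 2 - (c / 2 + val (sh b) / 2))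
      with ((val (sh a) - val (sh b)) / 2) by (unfold Rdiv; ring).
    unfold Rdiv. rewrite Rabs_mult. rewrite (Rabs_pos_eq (/2)) by lra. simpl. lra.
Qed.

Lemma val_pos m : forall a, a m = true -> (/2)^(S m) <= val a.
Proof.
  induction m; intros a H.
  - rewrite val_eq, H. pose proof (val_bnd (sh a)). simpl. lra.
  - rewrite val_eq. specialize (IHm (sh a) H). pose proof (val_bnd (sh a)).
    simpl in *. destruct (a 0%nat); lra.
Qed.

Lemma val0 a : val a = 0 -> forall n, a n = false.
Proof.
  intros H n. destruct (a n) eqn:E; auto. pose proof (val_pos n a E). pose proof (pow2_pos (S n)). lra.
Qed.
Lemma val1 a : val a = 1 -> forall n, a n = true.
Proof.
  intros H n. pose proof (val_compl a). assert (val (fun n => negb (a n)) = 0) by lra.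
  pose proof (val0 _ H1 n) as H2; cbv beta in H2; destruct (a n); simpl in H2; congruence.
Qed.
Lemma all0 a : (forall n, a n = false) -> val a = 0.
Proof.
  intro H. pose proof (val_close 0 a (fun _ => false)).
  unfold val. rewrite (Series_ext _ (fun n => 0 * (/2)^(S n))).
  rewrite Series_scal_l. ring. intro n. unfold tm. rewrite H. ring.
Qed.
Lemma all1 a : (forall n, a n = true) -> val a = 1.
Proof.
  intro H. pose proof (val_compl a). rewrite (all0 (fun n => negb (a n))) in H0. lra.
  intro n; rewrite H; reflexivity.
Qed.

Definition Allowed (a b : nat -> bool) : Prop :=
  (forall n, a n = b n) \/
  (exists D, (forall n, (n < D)%nat -> a n = b n) /\ a D <> b D /\
             forall n, (D < n)%nat -> a n = b D /\ b n = a D) \/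
  (forall n, a n <> b n /\ a n = a 0%nat).

Lemma switch_val D : forall a b, (forall n, (n < D)%nat -> a n = b n) -> a D <> b D ->
  (forall n, (D < n)%nat -> a n = b D /\ b n = a D) -> val a = val b.
Proof.
  induction D; intros a b H1 H2 H3.
  - rewrite (val_eq a), (val_eq b).
    assert (HS : forall n, sh a n = b 0%nat /\ sh b n = a 0%nat) by (intro n; apply H3; lia).
    destruct (a 0%nat) eqn:Ea, (b 0%nat) eqn:Eb; try congruence.
    + rewrite (all0 (sh a)), (all1 (sh b)) by (intro n; apply HS). lra.
    + rewrite (all1 (sh a)), (all0 (sh b)) by (intro n; apply HS). lra.
  - rewrite (val_eq a), (val_eq b). rewrite (H1 0%nat) by lia.
    rewrite (IHD (sh a) (sh b)); auto.
    + intros n Hn. apply H1. lia.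
    + intros n Hn. apply H3. lia.
Qed.

Lemma val_switch D : forall a b, (forall n, (n < D)%nat -> a n = b n) -> a D <> b D ->
  val a = val b -> forall n, (D < n)%nat -> a n = b D /\ b n = a D.
Proof.
  induction D; intros a b H1 H2 H3.
  - rewrite (val_eq a), (val_eq b) in H3.
    pose proof (val_bnd (sh a)). pose proof (val_bnd (sh b)).
    destruct (a 0%nat) eqn:Ea, (b 0%nat) eqn:Eb; try congruence.
    + assert (val (sh a) = 0) by lra. assert (val (sh b) = 1) by lra.
      intros n Hn. destruct n; [lia|].
      pose proof (val0 _ H4 n). pose proof (val1 _ H5 n). unfold sh in *. auto.
    + assert (val (sh a) = 1) by lra. assert (val (sh b) = 0) by lra.
      intros n Hn. destruct n; [lia|].
      pose proof (val1 _ H4 n). pose proof (val0 _ H5 n). unfold sh in *. auto.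
  - rewrite (val_eq a), (val_eq b) in H3. rewrite (H1 0%nat) in H3 by lia.
    assert (val (sh a) = val (sh b)) by lra.
    intros n Hn. destruct n; [lia|].
    apply (IHD (sh a) (sh b)); auto.
    + intros m Hm. apply H1. lia.
    + lia.
Qed.

Lemma least_diff (a b : nat -> bool) : ~ (forall n, a n = b n) ->
  exists D, (forall n, (n < D)%nat -> a n = b n) /\ a D <> b D.
Proof.
  intro H. apply not_all_ex_not in H. destruct H as [n Hn].
  revert Hn. induction n as [n IH] using (well_founded_induction lt_wf). intro Hn.
  destruct (classic (forall m, (m < n)%nat -> a m = b m)) as [Hc|Hc].
  - exists n; auto.
  - apply not_all_ex_not in Hc. destruct Hc as [m Hm].
    apply imply_to_and in Hm. destruct Hm. apply (IH m); auto.
Qed.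

Definition G1 (t : R) := t * (1 - t).
Definition G2 (t : R) := t * (1 - t) * (t - /2).

Lemma G_char t t' : 0 <= t <= 1 -> 0 <= t' <= 1 ->
  (G1 t = G1 t' /\ G2 t = G2 t') <-> (t = t' \/ (t = 0 /\ t' = 1) \/ (t = 1 /\ t' = 0)).
Proof.
  intros Ht Ht'. unfold G1, G2. split.
  - intros [E1 E2].
    assert (F : (t - t') * (1 - t - t') = 0) by nra.
    apply Rmult_integral in F. destruct F as [F|F]; [left; lra|].
    assert (t' = 1 - t) by lra. subst t'.
    assert (F2 : t * (1 - t) * (t - /2) = 0) by nra.
    apply Rmult_integral in F2. destruct F2 as [F2|F2].
    + apply Rmult_integral in F2. destruct F2; right; [left|right]; lra.
    + left; lra.
  - intros [->|[[-> ->]|[-> ->]]]; split; ring.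
Qed.

Lemma G_allowed a b : (G1 (val a) = G1 (val b) /\ G2 (val a) = G2 (val b)) <-> Allowed a b.
Proof.
  rewrite G_char by apply val_bnd. split.
  - intros [E|[[E1 E2]|[E1 E2]]].
    + destruct (classic (forall n, a n = b n)) as [Hc|Hc]; [left; exact Hc|].
      right; left. destruct (least_diff a b Hc) as [D [H1 H2]]. exists D.
      repeat split; auto; apply (val_switch D a b H1 H2 E); auto.
    + right; right. intro n. pose proof (val0 _ E1). pose proof (val1 _ E2).
      rewrite H, H0, H. split; congruence.
    + right; right. intro n. pose proof (val1 _ E1). pose proof (val0 _ E2).
      rewrite H, H0, H. split; congruence.
  - intros [H|[[D [H1 [H2 H3]]]|H]].
    + left. unfold val. apply Series_ext. intro n. unfold tm. rewrite H. reflexivity.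
    + left. apply (switch_val D); auto.
    + right. destruct (a 0%nat) eqn:E.
      * right. split; [apply all1|apply all0]; intro n; destruct (H n) as [H1 H2];
          rewrite H2 in *; destruct (b n); congruence.
      * left. split; [apply all0|apply all1]; intro n; destruct (H n) as [H1 H2];
          rewrite H2 in *; destruct (b n); congruence.
Qed.

End M_C.
Import M_C.

Module M_D.
Import ListNotations.
Local Open Scope nat_scope.

Section Rules.
Variables (X : Type) (f : X -> X) (pM pN : X -> bool).
Definition it (n : nat) (x : X) := Nat.iter n f x.
Lemma it_S n x : it (S n) x = f (it n x). Proof. reflexivity. Qed.
Lemma it_Sr n x : it n (f x) = it (S n) x.
Proof. induction n; simpl; auto. unfold it in *. simpl. rewrite IHn. reflexivity. Qed.

Definition R1b := forall y, pM y <> pN y -> pM (f y) <> pN (f y).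
Definition R2b := forall p, pM p <> pN p -> pM (f p) = pM (f (f p)).
Definition R3b := forall p, pM p = pN p -> pM (f p) <> pN (f p) -> pM (f p) <> pM (f (f p)).
Definition AllowedAt x := Allowed (fun n => pM (it n x)) (fun n => pN (it n x)).

Lemma rules_allowed : (R1b /\ R2b /\ R3b) <-> forall x, AllowedAt x.
Proof.
  split.
  - intros (H1 & H2 & H3) x. unfold AllowedAt.
    set (a := fun n => pM (it n x)). set (b := fun n => pN (it n x)). unfold Allowed.
    destruct (classic (forall n, a n = b n)) as [Hc|Hc]; [left; exact Hc|].
    destruct (least_diff a b Hc) as [D [HD1 HD2]].
    assert (Hdiff : forall k, a (D + k) <> b (D + k)).
    { induction k. rewrite Nat.add_0_r. exact HD2.
      replace (D + S k) with (S (D + k)) by lia. unfold a, b in *. rewrite it_S. apply H1. auto. }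
    assert (Hconst : forall k, a (S D + k) = a (S D)).
    { induction k. rewrite Nat.add_0_r. reflexivity.
      rewrite <- IHk. replace (S D + S k) with (S (S (D + k))) by lia.
      replace (S D + k) with (S (D + k)) by lia. unfold a. rewrite !it_S. symmetry. apply H2.
      apply (Hdiff k). }
    assert (Hb : forall n, a n <> b n -> b n = negb (a n)).
    { intros n H. destruct (a n), (b n); simpl; congruence. }
    destruct D as [|D].
    + destruct (Bool.bool_dec (a 1) (a 0)) as [E|E].
      * right; right. intro n. split.
        -- replace n with (0 + n) by lia. apply Hdiff.
        -- destruct n; auto. replace (S n) with (S 0 + n) by lia. rewrite Hconst. exact E.
      * right; left. exists 0. split; [exact HD1|split; [exact HD2|]]. intros n Hn.
        assert (b 0 = negb (a 0)) by (apply Hb; exact HD2).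
        assert (a 1 = negb (a 0)) by (destruct (a 1), (a 0); simpl in *; congruence).
        assert (Hn' : n = S 0 + (n - 1)) by lia.
        split.
        -- rewrite Hn', Hconst. congruence.
        -- rewrite Hb. rewrite Hn', Hconst. rewrite H0; destruct (a 0); reflexivity. rewrite Hn'. apply (Hdiff (S (n-1))).
    + right; left. exists (S D). split; [exact HD1|split; [exact HD2|]]. intros n Hn.
      assert (E3 : a (S (S D)) <> a (S D)).
      { unfold a. rewrite !it_S. intro E. apply (H3 (it D x)).
        - apply (HD1 D). lia.
        - exact HD2.
        - symmetry. exact E. }
      assert (b (S D) = negb (a (S D))) by (apply Hb; exact HD2).
      assert (a (S (S D)) = negb (a (S D))) by (destruct (a (S (S D))), (a (S D)); simpl in *; congruence).
      replace n with (S (S D) + (n - S (S D))) by lia.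
      split.
      * rewrite Hconst. congruence.
      * assert (Hd : a (S (S D) + (n - S (S D))) <> b (S (S D) + (n - S (S D))))
          by (replace (S (S D) + (n - S (S D))) with (S D + S (n - S (S D))) by lia; apply Hdiff).
        rewrite (Hb _ Hd), Hconst, H0. destruct (a (S D)); reflexivity.
  - intro H. split; [|split].
    + intros y Hy. destruct (H y) as [E|[[D [E1 [E2 E3]]]|E]]; simpl in *.
      * exfalso. apply Hy. apply (E 0).
      * destruct D. destruct (E3 1 ltac:(lia)) as [F1 F2]. simpl in *.
        unfold it in *; simpl in *. rewrite F1, F2. congruence.
        exfalso. apply Hy. apply (E1 0). lia.
      * apply (E 1).
    + intros p Hp. destruct (H p) as [E|[[D [E1 [E2 E3]]]|E]]; simpl in *.
      * exfalso. apply Hp. apply (E 0).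
      * destruct D. destruct (E3 1 ltac:(lia)) as [F1 F2]. destruct (E3 2 ltac:(lia)) as [F3 F4].
        unfold it in *; simpl in *. congruence.
        exfalso. apply Hp. apply (E1 0). lia.
      * destruct (E 1) as [_ F1]. destruct (E 2) as [_ F2]. unfold it in *; simpl in *. congruence.
    + intros p Hp Hq. destruct (H p) as [E|[[D [E1 [E2 E3]]]|E]]; simpl in *.
      * exfalso. apply Hq. apply (E 1).
      * destruct D. contradiction.
        destruct D. destruct (E3 2 ltac:(lia)) as [F1 F2]. unfold it in *; simpl in *.
        intro F. rewrite <- F in F1. congruence.
        exfalso. apply Hq. apply (E1 1). lia.
      * exfalso. apply (E 0). exact Hp.
Qed.
End Rules.

End M_D.
Import M_D.

Module M_E.
Import ListNotations.
Local Open Scope R_scope.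

Fixpoint theta (n w : nat) : formula L :=
  match n with
  | 0 => Pf w
  | S n => fEx (L:=L) tt (S w) (fAnd (Sf w (S w)) (theta n (S w)))
  end.
Definition psi (n : nat) := theta n 0.

Lemma theta_free n : forall w s m, ffree (theta n w) s m -> m = w.
Proof.
  induction n; intros w s m H; simpl in H.
  - destruct H as [[_ H]|[]]. auto.
  - destruct H as [[H|H] H'].
    + destruct H as [[_ H]|[[_ H]|[]]]; auto. subst. destruct s; tauto.
    + apply IHn in H. subst. destruct s; tauto.
Qed.

Lemma psi_vars n : in_vars (L:=L) (tt :: nil) (psi n).
Proof. intros s m H. apply theta_free in H. subst. destruct s. reflexivity. Qed.

Section Th.
Context {Om : unit -> Type}.
Lemma sat_theta (M : @structure L Om) (f : Om tt -> Om tt) (Hf : forall x y, SR M x y <-> y = f x) :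
  forall n w rho, sat M rho (theta n w) <-> PR M (it _ f n (rho tt w)).
Proof.
  induction n; intros w rho.
  - simpl. reflexivity.
  - cbn [theta sat]. rewrite ex_upd. split.
    + intros [x [H1 H2]]. apply IHn in H2. rewrite upd_same in H2.
      change (SR M (upd rho (S w) x tt w) (upd rho (S w) x tt (S w))) in H1.
      rewrite upd_same, upd_other in H1 by lia. apply Hf in H1. subst x.
      rewrite it_Sr in H2. exact H2.
    + intro H. exists (f (rho tt w)). split.
      * change (SR M (upd rho (S w) (f (rho tt w)) tt w) (upd rho (S w) (f (rho tt w)) tt (S w))).
        rewrite upd_same, upd_other by lia. apply Hf. reflexivity.
      * apply IHn. rewrite upd_same. rewrite it_Sr. exact H.
Qed.
End Th.

Definition dec (P : Prop) : bool := if excluded_middle_informative P then true else false.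
Lemma dec_true P : dec P = true <-> P.
Proof. unfold dec. destruct (excluded_middle_informative P); split; intros; auto; congruence. Qed.
Lemma dec_false P : dec P = false <-> ~ P.
Proof. unfold dec. destruct (excluded_middle_informative P); split; intros; auto; try congruence; tauto. Qed.
Lemma dec_iff P Q : (P <-> Q) -> dec P = dec Q.
Proof. intro H. unfold dec. destruct (excluded_middle_informative P), (excluded_middle_informative Q); tauto. Qed.

Definition bitp (p : formula L -> Prop) (n : nat) : bool := dec (p (psi n)).
Definition Gsel {n} (j : Fin.t n) : R -> R := match j with Fin.F1 => G1 | Fin.FS _ => G2 end.
Definition Fam (i : bool) (p : formula L -> Prop) (j : Fin.t 2) : R :=
  if i then Gsel j (val (bitp p)) else (if dec (p (Sf 0 1)) then 1 else 0).
Definition Xs (i : bool) : list unit := if i then (tt :: nil) else (tt :: tt :: nil).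

Lemma Gsel_eq {n} (j : Fin.t n) s t : G1 s = G1 t -> G2 s = G2 t -> Gsel j s = Gsel j t.
Proof. destruct j; simpl; auto. Qed.

Lemma G_lip s t : 0 <= s <= 1 -> 0 <= t <= 1 -> Rabs (G1 s - G1 t) <= Rabs (s - t) /\ Rabs (G2 s - G2 t) <= Rabs (s - t).
Proof.
  intros Hs Ht. unfold G1, G2. split.
  - replace (s * (1 - s) - t * (1 - t)) with ((s - t) * (1 - s - t)) by ring.
    rewrite Rabs_mult. assert (Rabs (1 - s - t) <= 1) by (apply Rabs_le; lra).
    pose proof (Rabs_pos (s - t)). nra.
  - replace (s * (1 - s) * (s - / 2) - t * (1 - t) * (t - / 2))
      with ((s - t) * (-(s*s + s*t + t*t) + 3/2*(s+t) - /2)) by field.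
    rewrite Rabs_mult. assert (Rabs (-(s*s + s*t + t*t) + 3/2*(s+t) - /2) <= 1) by (apply Rabs_le; split; nra).
    pose proof (Rabs_pos (s - t)). nra.
Qed.

Lemma G_bnd t : 0 <= t <= 1 -> Rabs (G1 t) <= 1 /\ Rabs (G2 t) <= 1.
Proof. intro H. unfold G1, G2. split; apply Rabs_le; split; nra. Qed.

End M_E.
Import M_E.

Module M_F.
Import ListNotations.
Local Open Scope R_scope.

Definition lit (p : formula L -> Prop) n : formula L := if bitp p n then psi n else fNot (psi n).
Fixpoint conjN (p : formula L -> Prop) (N : nat) : formula L :=
  match N with 0 => fNot fFalse | S N => fAnd (conjN p N) (lit p N) end.

Lemma conjN_vars p N : in_vars (L:=L) (tt :: nil) (conjN p N).
Proof.
  induction N; intros s m H; simpl in H; [contradiction|].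
  destruct H as [H|H]; [apply IHN; exact H|].
  unfold lit in H. destruct (bitp p N); simpl in H; apply (psi_vars N); exact H.
Qed.

Lemma conjN_sat {Om} (M : @structure L Om) rho p N :
  sat M rho (conjN p N) <-> forall n, (n < N)%nat -> (bitp p n = true <-> sat M rho (psi n)).
Proof.
  induction N; simpl.
  - split; intros; [lia|tauto].
  - rewrite IHN. unfold lit. split.
    + intros [H1 H2] n Hn. destruct (Nat.eq_dec n N).
      * subst. destruct (bitp p N); simpl in H2; split; intros; auto; try congruence; contradiction.
      * apply H1. lia.
    + intro H. split. intros n Hn; apply H; lia.
      specialize (H N ltac:(lia)). destruct (bitp p N); simpl; [apply H; auto|].
      intro Hs. apply H in Hs. discriminate.
Qed.

Lemma bitp_tp {Om} (M : @structure L Om) rho n :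
  bitp (tp M (tt :: nil) rho) n = true <-> sat M rho (psi n).
Proof.
  unfold bitp. rewrite dec_true. unfold tp. split; [tauto|]. intro; split; auto. apply psi_vars.
Qed.

Lemma CL_true : CL_definable T (Xs true) 2 (Fam true).
Proof.
  split.
  - intros p [Om [M [rho [HM Hp]]]] eps Heps.
    destruct (pow_lt_1_zero (/2) ltac:(rewrite Rabs_pos_eq; lra) eps Heps) as [N HN].
    specialize (HN N (le_n N)). rewrite Rabs_pos_eq in HN by (apply pow_le; lra).
    exists (conjN p N). split.
    + subst p. unfold tp at 1. split. apply conjN_vars. apply conjN_sat. intros n _.
      apply bitp_tp.
    + intros q [Om' [M' [rho' [HM' Hq]]]] Hqp j. subst q.
      destruct Hqp as [_ Hs]. rewrite conjN_sat in Hs.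
      assert (Hb : forall n, (n < N)%nat -> bitp (tp M' (tt :: nil) rho') n = bitp p n).
      { intros n Hn. specialize (Hs n Hn). destruct (bitp p n) eqn:E.
        - apply bitp_tp. apply Hs. reflexivity.
        - destruct (bitp (tp M' (tt :: nil) rho') n) eqn:E2; auto. apply bitp_tp in E2. apply Hs in E2. discriminate. }
      pose proof (val_close N _ _ Hb) as Hc.
      unfold Fam.
      pose proof (G_lip (val (bitp (tp M' (tt :: nil) rho'))) (val (bitp p)) (val_bnd _) (val_bnd _)) as [L1 L2].
      destruct j; simpl; lra.
  - exists 1. intros p _ j. unfold Fam. pose proof (G_bnd (val (bitp p)) (val_bnd _)).
    destruct j; simpl; tauto.
Qed.

Lemma CL_false : CL_definable T (Xs false) 2 (Fam false).
Proof.
  split.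
  - intros p [Om [M [rho [HM Hp]]]] eps Heps.
    exists (if dec (p (Sf 0 1)) then Sf 0 1 else fNot (Sf 0 1)). split.
    + destruct (dec (p (Sf 0 1))) eqn:E.
      * apply (proj1 (dec_true _)) in E. exact E.
      * apply (proj1 (dec_false _)) in E. subst p. unfold tp in *. split.
        -- intros s m H. simpl in H. destruct s. destruct H as [[_ H]|[[_ H]|[]]]; subst; reflexivity.
        -- intro Hs. apply E. split; auto. intros s m H. simpl in H. destruct s.
           destruct H as [[_ H]|[[_ H]|[]]]; subst; reflexivity.
    + intros q [Om' [M' [rho' [_ Hq']]]] Hq j. unfold Fam.
      assert (dec (q (Sf 0 1)) = dec (p (Sf 0 1))).
      { destruct (dec (p (Sf 0 1))) eqn:E.
        - apply dec_true. exact Hq.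
        - apply dec_false. intro H. subst q. destruct Hq as [_ Hq]. apply Hq. destruct H as [_ H]. exact H. }
      rewrite H. rewrite Rminus_diag, Rabs_R0. exact Heps.
  - exists 1. intros p _ j. unfold Fam. destruct (dec (p (Sf 0 1))); rewrite ?Rabs_R1, ?Rabs_R0; lra.
Qed.

End M_F.
Import M_F.

Module M_G.
Import ListNotations.
Local Open Scope R_scope.

Lemma deq P Q : (P <-> Q) <-> dec P = dec Q.
Proof.
  split; [apply dec_iff|]. unfold dec.
  destruct (excluded_middle_informative P), (excluded_middle_informative Q); intros; try tauto; discriminate.
Qed.
Lemma dneq P Q : ~ (P <-> Q) <-> dec P <> dec Q.
Proof. pose proof (deq P Q). tauto. Qed.
Lemma dnot P Q : (P <-> ~ Q) <-> dec P <> dec Q.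
Proof.
  unfold dec. destruct (excluded_middle_informative P), (excluded_middle_informative Q); split; intros; try tauto; try congruence.
Qed.

Section Y.
Context {Om : unit -> Type}.
Variables (M N : @structure L Om) (f : Om tt -> Om tt).
Hypothesis Hf : forall x y, SR M x y <-> y = f x.
Let pM := fun y => dec (PR M y).
Let pN := fun y => dec (PR N y).

Lemma R1_equiv : R1S M N <-> R1b _ f pM pN.
Proof.
  unfold R1S, R1b, DS, pM, pN. split.
  - intros H y Hy. apply dneq. apply (H y (f y)). apply Hf; auto. apply dneq; auto.
  - intros H x y Hxy Hx. apply Hf in Hxy. subst. apply dneq. apply H. apply dneq; auto.
Qed.
Lemma R2_equiv : R2S M N <-> R2b _ f pM pN.
Proof.
  unfold R2S, R2b, DS, pM, pN. split.
  - intros H p Hp. apply deq. apply (H p (f p) (f (f p))); try apply Hf; auto. apply dneq; auto.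
  - intros H x y z Hxy Hyz Hx. apply Hf in Hxy. apply Hf in Hyz. subst. apply deq. apply H. apply dneq; auto.
Qed.
Lemma R3_equiv : R3S M N <-> R3b _ f pM pN.
Proof.
  unfold R3S, R3b, DS, pM, pN. split.
  - intros H p Hp Hq. apply dnot. apply (H p (f p) (f (f p))); try apply Hf; auto.
    rewrite dneq. tauto. apply dneq; auto.
  - intros H x y z Hxy Hyz Hx Hy. apply Hf in Hxy. apply Hf in Hyz. subst. apply dnot. apply H.
    apply deq. tauto. apply dneq; auto.
Qed.
End Y.

Lemma succ_exists {Om : unit -> Type} (M : @structure L Om) :
  is_model T M -> exists f : Om tt -> Om tt, forall x y, SR M x y <-> y = f x.
Proof.
  intro HM. apply model_T in HM. destruct HM as (_ & Ht & Hu).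
  exists (fun x => proj1_sig (constructive_indefinite_description _ (Ht x))).
  intros x y. destruct (constructive_indefinite_description _ (Ht x)) as [z Hz]. simpl.
  split. intro H. apply (Hu x); auto. intros ->. exact Hz.
Qed.

Lemma Fam_false {Om : unit -> Type} (M : @structure L Om) rho j :
  Fam false (tp M (Xs false) rho) j = if dec (SR M (rho tt 0%nat) (rho tt 1%nat)) then 1 else 0.
Proof.
  unfold Fam. rewrite (dec_iff _ (SR M (rho tt 0%nat) (rho tt 1%nat))). reflexivity.
  unfold tp. split; [intros [_ H]; exact H|]. intro H. split; [|exact H].
  intros s m Hm. simpl in Hm. destruct s. destruct Hm as [[_ Hm]|[[_ Hm]|[]]]; subst; reflexivity.
Qed.

Lemma Fam_true {Om : unit -> Type} (M : @structure L Om) f (Hf : forall x y, SR M x y <-> y = f x) rho j :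
  Fam true (tp M (Xs true) rho) j = Gsel j (val (fun n => dec (PR M (it _ f n (rho tt 0%nat))))).
Proof.
  unfold Fam. f_equal. f_equal. apply functional_extensionality. intro n.
  unfold bitp. apply dec_iff. unfold tp. unfold psi. rewrite (sat_theta M f Hf).
  split; [tauto|]. intro; split; auto. apply psi_vars.
Qed.

Lemma yc_iff {Om : unit -> Type} (M N : @structure L Om) : is_model T M -> is_model T N ->
  (mer_rel (fun psi => In psi tau) M N <->
   forall i rho j, Fam i (tp M (Xs i) rho) j = Fam i (tp N (Xs i) rho) j).
Proof.
  intros HM HN.
  destruct (succ_exists M HM) as [f Hf]. destruct (succ_exists N HN) as [g Hg].
  assert (Hne : exists x : Om tt, True).
  { apply model_T in HM. destruct HM as [[x] _]. exists x; auto. }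
  rewrite (tau_sem M N Hne). split.
  - intros (Hs & H1 & H2 & H3).
    assert (Hfg : forall x, g x = f x). { intro x. symmetry. apply Hg. apply Hs. apply Hf. reflexivity. }
    assert (Hg' : forall x y, SR N x y <-> y = f x). { intros x y. rewrite Hg, Hfg. tauto. }
    intros [|] rho j.
    + rewrite (Fam_true M f Hf), (Fam_true N f Hg').
      rewrite R1_equiv, R2_equiv, R3_equiv in * by exact Hf.
      assert (HA := proj1 (rules_allowed _ f _ _) (conj H1 (conj H2 H3)) (rho tt 0%nat)).
      apply G_allowed in HA. destruct HA as [E1 E2]. apply Gsel_eq; auto.
    + rewrite !Fam_false. rewrite (dec_iff _ _ (Hs _ _)). reflexivity.
  - intro H.
    assert (Hs : SeqS M N).
    { intros x y. pose (rho := (fun s m => match s as s0 return Om s0 with tt => if Nat.eqb m 0 then x else y end)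
                        : @valuation L Om).
      specialize (H false rho Fin.F1). rewrite !Fam_false in H. simpl in H.
      apply deq. destruct (dec (SR M x y)), (dec (SR N x y)); auto; lra. }
    assert (Hfg : forall x, g x = f x). { intro x. symmetry. apply Hg. apply Hs. apply Hf. reflexivity. }
    assert (Hg' : forall x y, SR N x y <-> y = f x). { intros x y. rewrite Hg, Hfg. tauto. }
    split; [exact Hs|].
    rewrite R1_equiv, R2_equiv, R3_equiv by exact Hf.
    apply rules_allowed. intro x.
    pose (rho := (fun s m => match s as s0 return Om s0 with tt => x end) : @valuation L Om).
    pose proof (H true rho Fin.F1) as E1. pose proof (H true rho (Fin.FS Fin.F1)) as E2.
    rewrite (Fam_true M f Hf), (Fam_true N f Hg') in E1, E2. simpl in E1, E2.
    apply G_allowed. split; assumption.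
Qed.

End M_G.
Import M_G.

Module M_H.
Import ListNotations.
Local Open Scope nat_scope.

Ltac sent := intros s n; destruct s; cbn; intuition (subst; try discriminate; try lia).

Lemma theory_T : theory T.
Proof. intros phi [->| ->]; unfold Tot, Fun, Sf, v; sent. Qed.

Lemma tau_sent : forall psi, In psi tau -> sentence psi.
Proof.
  intros psi H. simpl in H. destruct H as [<-|[<-|[<-|[<-|[]]]]];
  unfold M_B.Seq, M_B.R1, M_B.R2, M_B.R3, Dd, fIff, SM, SN, PM, PN, vp; sent.
Qed.

Lemma MER : is_MER T (fun psi => In psi tau).
Proof.
  split; [exact tau_sent|]. intros Om _. split; [|split].
  - intros M HM. apply (proj2 (yc_iff M M HM HM)). auto.
  - intros M N HM HN H. apply (proj2 (yc_iff N M HN HM)). pose proof (proj1 (yc_iff M N HM HN) H) as H'.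
    intros; symmetry; auto.
  - intros M N P HM HN HP H1 H2. pose proof (proj1 (yc_iff _ _ HM HN) H1) as H1'.
    pose proof (proj1 (yc_iff _ _ HN HP) H2) as H2'.
    apply (proj2 (yc_iff _ _ HM HP)). intros; rewrite H1'; auto.
Qed.

Lemma YC : yclept T (fun psi => In psi tau).
Proof.
  exists bool, Xs, (fun _ => 2%nat), Fam. split.
  - intros [|]; [apply CL_true|apply CL_false].
  - intros Om M N HM HN. apply yc_iff; auto.
Qed.

End M_H.
Import M_H.

Module M_I.
Import ListNotations.
Local Open Scope Z_scope.

Definition Elt : Type := (option ((Z -> bool) * nat) * Z)%type.
Definition OmE : unit -> Type := fun _ => Elt.
Definition lab (al : Z -> bool) (x : Elt) : bool :=
  match fst x with None => al (snd x) | Some (b, _) => b (snd x) end.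
Definition shiftE (x : Elt) (d : Z) : Elt := (fst x, snd x + d).
Definition Srel (x y : Elt) : Prop := y = shiftE x 1.

Definition mkM (al : Z -> bool) : @structure L OmE :=
  Structure (L:=L) (fun (f : Empty_set) => match f return hlist OmE (fargs (l:=L) f) -> OmE (fres (l:=L) f) with end)
    (fun r => match r as r0 return hlist OmE (rargs (l:=L) r0) -> Prop with
              | true => fun h => Srel (hhd h) (hhd (htl h))
              | false => fun h => lab al (hhd h) = true
              end).

Lemma shift0 x : shiftE x 0 = x.
Proof. destruct x; unfold shiftE; simpl; f_equal; lia. Qed.
Lemma shift_shift x d e : shiftE (shiftE x d) e = shiftE x (d + e).
Proof. destruct x; unfold shiftE; simpl; f_equal; lia. Qed.
Lemma shift_eq a b d e : shiftE a d = shiftE b e <-> a = shiftE b (e - d).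
Proof.
  destruct a as [a1 a2], b as [b1 b2]; unfold shiftE; simpl. split; intro H; inversion H; subst; f_equal; lia.
Qed.
Lemma shift_self x e : x = shiftE x e <-> e = 0.
Proof.
  destruct x as [x1 x2]; unfold shiftE; simpl. split; intro H. inversion H; lia. subst; f_equal; lia.
Qed.

Definition Inv (al be : Z -> bool) (r : Z) (l : list (Elt * Elt)) : Prop :=
  (forall p q, In p l -> In q l -> forall d, Z.abs d <= r ->
      (fst q = shiftE (fst p) d <-> snd q = shiftE (snd p) d)) /\
  (forall p, In p l -> forall d, Z.abs d <= r -> lab al (shiftE (fst p) d) = lab be (shiftE (snd p) d)).

Lemma Inv_mono al be r r' l l' : r' <= r -> (forall e, In e l' -> In e l) -> Inv al be r l -> Inv al be r' l'.
Proof.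
  intros Hr Hl [H1 H2]. split.
  - intros p q Hp Hq d Hd. apply H1; auto. lia.
  - intros p Hp d Hd. apply H2; auto. lia.
Qed.

Definition swp (e : Elt * Elt) := (snd e, fst e).
Lemma Inv_swap al be r l : Inv al be r l -> Inv be al r (map swp l).
Proof.
  intros [H1 H2]. split.
  - intros p q Hp Hq d Hd. apply in_map_iff in Hp, Hq.
    destruct Hp as [p' [<- Hp]], Hq as [q' [<- Hq]]. simpl. symmetry. apply H1; auto.
  - intros p Hp d Hd. apply in_map_iff in Hp. destruct Hp as [p' [<- Hp]]. simpl. symmetry. apply H2; auto.
Qed.

Fixpoint maxidx (l : list (Elt * Elt)) : nat :=
  match l with
  | nil => 0%nat
  | e :: l' => match fst (snd e) with Some (_, i) => Nat.max i (maxidx l') | None => maxidx l' end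
  end.
Lemma maxidx_spec l e b i : In e l -> fst (snd e) = Some (b, i) -> (i <= maxidx l)%nat.
Proof.
  induction l as [|e' l IH]; [simpl; tauto|]. intros [<-|H] E.
  - destruct e' as [a1 [[[b' i']|] z']]; simpl in *; inversion E; lia.
  - specialize (IH H E). destruct e' as [a1 [[[b' i']|] z']]; simpl in *; lia.
Qed.

Lemma forth al be r l : 0 <= r -> Inv al be (2 * r + 1) l ->
  forall x, exists y, Inv al be r ((x, y) :: l).
Proof.
  intros Hr [H1 H2] x.
  destruct (classic (exists p d, In p l /\ Z.abs d <= r + 1 /\ x = shiftE (fst p) d)) as [[p [d [Hp [Hd Hx]]]]|Hc].
  - exists (shiftE (snd p) d). split.
    + intros p1 q1 Hp1 Hq1 e He. destruct Hp1 as [<-|Hp1], Hq1 as [<-|Hq1]; simpl.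
      * rewrite !shift_self. tauto.
      * rewrite Hx, !shift_shift. apply H1; auto. lia.
      * rewrite Hx, !shift_eq. apply H1; auto. lia.
      * apply H1; auto. lia.
    + intros p1 Hp1 e He. destruct Hp1 as [<-|Hp1]; simpl.
      * rewrite Hx, !shift_shift. apply H2; auto. lia.
      * apply H2; auto. lia.
  - pose (N := S (maxidx l)).
    exists (Some ((fun w => lab al (fst x, w)), N), snd x).
    assert (Hfr : forall p, In p l -> fst (snd p) <> Some ((fun w => lab al (fst x, w)), N)).
    { intros p Hp E. pose proof (maxidx_spec l p _ _ Hp E). unfold N in H. lia. }
    assert (Hfar : forall p d, In p l -> Z.abs d <= r + 1 -> x <> shiftE (fst p) d).
    { intros p d Hp Hd E. apply Hc. exists p, d. auto. }
    split.
    + intros p1 q1 Hp1 Hq1 e He. destruct Hp1 as [<-|Hp1], Hq1 as [<-|Hq1]; simpl.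
      * rewrite !shift_self. tauto.
      * split; intro E.
        -- exfalso. apply (Hfar q1 (- e) Hq1 ltac:(lia)). rewrite E, shift_shift, <- shift0 at 1.
           f_equal. lia.
        -- exfalso. apply (Hfr q1 Hq1). rewrite E. reflexivity.
      * split; intro E.
        -- exfalso. apply (Hfar p1 e Hp1 ltac:(lia)). exact E.
        -- exfalso. apply (Hfr p1 Hp1). destruct (snd p1) as [c z]. unfold shiftE in E. simpl in E.
           inversion E. reflexivity.
      * apply H1; auto. lia.
    + intros p1 Hp1 e He. destruct Hp1 as [<-|Hp1]; simpl.
      * unfold lab, shiftE. simpl. reflexivity.
      * apply H2; auto. lia.
Qed.

Lemma back al be r l : 0 <= r -> Inv al be (2 * r + 1) l ->
  forall y, exists x, Inv al be r ((x, y) :: l).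
Proof.
  intros Hr H y. apply Inv_swap in H. destruct (forth _ _ _ _ Hr H y) as [x Hx].
  exists x. apply Inv_swap in Hx. simpl in Hx.
  eapply Inv_mono; [|intros e He|exact Hx]. lia. simpl. rewrite map_map.
  destruct He as [<-|He]; [left; reflexivity|right]. rewrite map_ext with (g := fun e => e), map_id; auto.
  intros [a b]; reflexivity.
Qed.

End M_I.
Import M_I.

Module M_J.
Import ListNotations.
Local Open Scope Z_scope.

Lemma term_var s (t : term L s) : exists n, t = tvar s n.
Proof. destruct t as [s n|f ts]; [eauto|destruct f]. Qed.

Definition tcase {s l} (ts : terms L (s :: l)) : exists t ts', ts = tcons t ts' :=
  match ts as ts0 in terms _ l0 return
        (match l0 return terms L l0 -> Prop with
         | nil => fun _ => True
         | s0 :: l1 => fun ts1 => exists t ts', ts1 = tcons t ts' end) ts0 with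
  | tnil => I
  | tcons t ts' => ex_intro _ t (ex_intro _ ts' eq_refl)
  end.
Definition tnilcase (ts : terms L nil) : ts = tnil :=
  match ts as ts0 in terms _ l0 return
        (match l0 return terms L l0 -> Prop with
         | nil => fun ts1 => ts1 = tnil
         | _ :: _ => fun _ => True end) ts0 with
  | tnil => eq_refl
  | tcons _ _ => I
  end.

Fixpoint qd (phi : formula L) : nat :=
  match phi with
  | fEq _ _ | fRel _ _ | fFalse => 0
  | fNot p => qd p
  | fAnd p q | fOr p q | fImp p q => Nat.max (qd p) (qd q)
  | fAll _ _ p | fEx _ _ p => S (qd p)
  end.
Fixpoint rad (k : nat) : Z := match k with 0%nat => 1 | S k => 2 * rad k + 1 end.
Lemma rad_pos k : 1 <= rad k. Proof. induction k; cbn [rad]; lia. Qed.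
Lemma rad_mono k k' : (k <= k')%nat -> rad k <= rad k'.
Proof.
  intro H. induction H as [|m H IH]; [lia|]. cbn [rad]. pose proof (rad_pos m). lia.
Qed.

Definition pairs (r1 r2 : @valuation L OmE) (V : list nat) := map (fun n => (r1 tt n, r2 tt n)) V.

Lemma EF al be (phi : formula L) : forall (r1 r2 : @valuation L OmE) V,
  (forall m, ffree phi tt m -> In m V) -> Inv al be (rad (qd phi)) (pairs r1 r2 V) ->
  (sat (mkM al) r1 phi <-> sat (mkM be) r2 phi).
Proof.
  induction phi as [s t u|r ts| |p IH|p IHp q IHq|p IHp q IHq|p IHp q IHq|s n p IH|s n p IH];
    intros r1 r2 V HV HI.
  - destruct (term_var s t) as [n ->]. destruct (term_var s u) as [m ->]. destruct s. simpl.
    assert (Hn : In n V) by (apply HV; simpl; auto).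
    assert (Hm : In m V) by (apply HV; simpl; auto).
    destruct HI as [H1 _].
    assert (Hp : In (r1 tt n, r2 tt n) (pairs r1 r2 V)) by (apply in_map_iff; eauto).
    assert (Hq : In (r1 tt m, r2 tt m) (pairs r1 r2 V)) by (apply in_map_iff; eauto).
    specialize (H1 _ _ Hp Hq 0 ltac:(simpl; pose proof (rad_pos 0); lia)). simpl in H1.
    rewrite !shift0 in H1. split; intro E; symmetry; apply H1; auto.
  - destruct r.
    + destruct (tcase ts) as [t1 [ts1 ->]]. destruct (tcase ts1) as [t2 [ts2 ->]].
      rewrite (tnilcase ts2). destruct (term_var _ t1) as [n ->]. destruct (term_var _ t2) as [m ->].
      simpl. unfold Srel.
      assert (Hn : In n V) by (apply HV; simpl; auto).
      assert (Hm : In m V) by (apply HV; simpl; auto).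
      destruct HI as [H1 _].
      assert (Hp : In (r1 tt n, r2 tt n) (pairs r1 r2 V)) by (apply in_map_iff; eauto).
      assert (Hq : In (r1 tt m, r2 tt m) (pairs r1 r2 V)) by (apply in_map_iff; eauto).
      apply (H1 _ _ Hp Hq 1). simpl. lia.
    + destruct (tcase ts) as [t1 [ts1 ->]]. rewrite (tnilcase ts1). destruct (term_var _ t1) as [n ->].
      simpl.
      assert (Hn : In n V) by (apply HV; simpl; auto).
      destruct HI as [_ H2].
      assert (Hp : In (r1 tt n, r2 tt n) (pairs r1 r2 V)) by (apply in_map_iff; eauto).
      specialize (H2 _ Hp 0 ltac:(simpl; lia)). simpl in H2. rewrite !shift0 in H2. rewrite H2. tauto.
  - simpl. tauto.
  - simpl. rewrite (IH r1 r2 V); auto. tauto.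
  - assert (A := IHp r1 r2 V ltac:(intros; apply HV; simpl; auto)
                    ltac:(eapply Inv_mono; [|intros e He; exact He|exact HI]; apply rad_mono; simpl; lia)).
    assert (B := IHq r1 r2 V ltac:(intros; apply HV; simpl; auto)
                    ltac:(eapply Inv_mono; [|intros e He; exact He|exact HI]; apply rad_mono; simpl; lia)).
    simpl. rewrite A, B. tauto.
  - assert (A := IHp r1 r2 V ltac:(intros; apply HV; simpl; auto)
                    ltac:(eapply Inv_mono; [|intros e He; exact He|exact HI]; apply rad_mono; simpl; lia)).
    assert (B := IHq r1 r2 V ltac:(intros; apply HV; simpl; auto)
                    ltac:(eapply Inv_mono; [|intros e He; exact He|exact HI]; apply rad_mono; simpl; lia)).
    simpl. rewrite A, B. tauto.
  - assert (A := IHp r1 r2 V ltac:(intros; apply HV; simpl; auto)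
                    ltac:(eapply Inv_mono; [|intros e He; exact He|exact HI]; apply rad_mono; simpl; lia)).
    assert (B := IHq r1 r2 V ltac:(intros; apply HV; simpl; auto)
                    ltac:(eapply Inv_mono; [|intros e He; exact He|exact HI]; apply rad_mono; simpl; lia)).
    simpl. rewrite A, B. tauto.
  - destruct s. cbn [sat]. rewrite !all_upd.
    assert (HV' : forall m, ffree p tt m -> In m (n :: V)).
    { intros m Hm. destruct (Nat.eq_dec m n); [left; auto|right]. apply HV. simpl. split; auto. intros [_ E]; congruence. }
    assert (Hsub : forall x y e, In e (pairs (upd r1 n x) (upd r2 n y) (n :: V)) -> In e ((x, y) :: pairs r1 r2 V)).
    { intros x y e He. unfold pairs in He. apply in_map_iff in He. destruct He as [k [<- Hk]].
      destruct (Nat.eq_dec k n). subst. rewrite !upd_same. left; auto.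
      right. rewrite !upd_other by auto. apply in_map_iff. exists k. split; auto. destruct Hk; [congruence|auto]. }
    cbn [qd rad] in HI. pose proof (rad_pos (qd p)) as Hrp. assert (Hr0 : 0 <= rad (qd p)) by lia.
    split.
    + intros H y. destruct (back al be (rad (qd p)) (pairs r1 r2 V) Hr0 HI y) as [x Hx].
      apply (IH (upd r1 n x) (upd r2 n y) (n :: V) HV'). exact (Inv_mono al be _ _ _ _ (Z.le_refl _) (Hsub x y) Hx). apply H.
    + intros H x. destruct (forth al be (rad (qd p)) (pairs r1 r2 V) Hr0 HI x) as [y Hy].
      apply (IH (upd r1 n x) (upd r2 n y) (n :: V) HV'). exact (Inv_mono al be _ _ _ _ (Z.le_refl _) (Hsub x y) Hy). apply H.
  - destruct s. cbn [sat]. rewrite !ex_upd.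
    assert (HV' : forall m, ffree p tt m -> In m (n :: V)).
    { intros m Hm. destruct (Nat.eq_dec m n); [left; auto|right]. apply HV. simpl. split; auto. intros [_ E]; congruence. }
    assert (Hsub : forall x y e, In e (pairs (upd r1 n x) (upd r2 n y) (n :: V)) -> In e ((x, y) :: pairs r1 r2 V)).
    { intros x y e He. unfold pairs in He. apply in_map_iff in He. destruct He as [k [<- Hk]].
      destruct (Nat.eq_dec k n). subst. rewrite !upd_same. left; auto.
      right. rewrite !upd_other by auto. apply in_map_iff. exists k. split; auto. destruct Hk; [congruence|auto]. }
    cbn [qd rad] in HI. pose proof (rad_pos (qd p)) as Hrp. assert (Hr0 : 0 <= rad (qd p)) by lia.
    split.
    + intros [x H]. destruct (forth al be (rad (qd p)) (pairs r1 r2 V) Hr0 HI x) as [y Hy].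
      exists y. apply (IH (upd r1 n x) (upd r2 n y) (n :: V) HV'). exact (Inv_mono al be _ _ _ _ (Z.le_refl _) (Hsub x y) Hy). apply H.
    + intros [y H]. destruct (back al be (rad (qd p)) (pairs r1 r2 V) Hr0 HI y) as [x Hx].
      exists x. apply (IH (upd r1 n x) (upd r2 n y) (n :: V) HV'). exact (Inv_mono al be _ _ _ _ (Z.le_refl _) (Hsub x y) Hx). apply H.
Qed.

End M_J.
Import M_J.

Module M_K.
Import ListNotations.
Local Open Scope Z_scope.

Definition tv {s} (t : term L s) : list nat :=
  match t with tvar _ n => (n :: nil) | tapp f _ => match f with end end.
Fixpoint tsv {l} (ts : terms L l) : list nat :=
  match ts with tnil => nil | tcons t ts => tv t ++ tsv ts end.
Fixpoint fvars (phi : formula L) : list nat :=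
  match phi with
  | fEq t u => tv t ++ tv u
  | fRel _ ts => tsv ts
  | fFalse => nil
  | fNot p => fvars p
  | fAnd p q | fOr p q | fImp p q => fvars p ++ fvars q
  | fAll _ n p | fEx _ n p => fvars p
  end.

Lemma tv_ok s (t : term L s) s' m : tfree t s' m -> In m (tv t).
Proof. destruct t as [s0 n|f ts]; [simpl; intros [_ ->]; auto|destruct f]. Qed.
Lemma tsv_ok l (ts : terms L l) s' m : tsfree ts s' m -> In m (tsv ts).
Proof.
  induction ts as [|s0 l0 t ts IH]; simpl; [tauto|].
  intros [H|H]; apply in_or_app; [left; eapply tv_ok; eauto|right; auto].
Qed.
Lemma fvars_ok phi s m : ffree phi s m -> In m (fvars phi).
Proof.
  induction phi; simpl; try tauto; intros; try (apply in_or_app; destruct H; [left|right]); eauto using tv_ok, tsv_ok;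
  destruct H; auto.
Qed.

Fixpoint sumabs (l : list Z) : Z := match l with nil => 0 | z :: l => Z.abs z + sumabs l end.
Lemma sumabs_nonneg l : 0 <= sumabs l. Proof. induction l; simpl; lia. Qed.
Lemma sumabs_in l z : In z l -> Z.abs z <= sumabs l.
Proof. induction l; simpl; [tauto|]. intros [->|H]; [pose proof (sumabs_nonneg l); lia|]. apply IHl in H; lia. Qed.

Section Far.
Variables (phi : formula L) (rho : @valuation L OmE).
Definition Vs := fvars phi.
Definition Bnd : Z := sumabs (map (fun n => snd (rho tt n)) Vs) + rad (qd phi).

Lemma Bnd_pos : 1 <= Bnd.
Proof. unfold Bnd. pose proof (sumabs_nonneg (map (fun n => snd (rho tt n)) Vs)). pose proof (rad_pos (qd phi)). lia. Qed.

Lemma far_mod al be : (forall z, - Bnd <= z <= Bnd -> al z = be z) ->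
  (sat (mkM al) rho phi <-> sat (mkM be) rho phi).
Proof.
  intro H. apply (EF al be phi rho rho Vs).
  - intros m Hm. apply (fvars_ok _ _ _ Hm).
  - split.
    + intros p q Hp Hq d Hd. unfold pairs in Hp, Hq. apply in_map_iff in Hp, Hq.
      destruct Hp as [a [<- _]], Hq as [b [<- _]]. simpl. tauto.
    + intros p Hp d Hd. unfold pairs in Hp. apply in_map_iff in Hp. destruct Hp as [a [<- Ha]]. simpl.
      assert (Hs : Z.abs (snd (rho tt a)) <= sumabs (map (fun n => snd (rho tt n)) Vs)).
      { apply sumabs_in. apply in_map_iff. exists a; auto. }
      unfold lab, shiftE. simpl. destruct (rho tt a) as [[[b i]|] z]; simpl in *; auto.
      apply H. unfold Bnd. lia.
Qed.
End Far.

Definition Lam (B : Z) (v : nat) (t : bool) (z : Z) : bool :=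
  if z <? - B then false else if z <=? B then Nat.testbit v (Z.to_nat (B - z)) else t.

Lemma trail v : exists j, (forall i, (i < j)%nat -> Nat.testbit v i = true /\ Nat.testbit (S v) i = false) /\
  Nat.testbit v j = false /\ Nat.testbit (S v) j = true /\
  (forall i, (j < i)%nat -> Nat.testbit (S v) i = Nat.testbit v i).
Proof.
  induction v as [v IH] using (well_founded_induction lt_wf).
  destruct (Nat.Even_or_Odd v) as [[w ->]|[w ->]].
  - exists 0%nat. split; [intros; lia|]. split; [apply Nat.testbit_even_0|].
    replace (S (2 * w)) with (2 * w + 1)%nat by lia. split; [apply Nat.testbit_odd_0|].
    intros i Hi. destruct i; [lia|]. rewrite Nat.testbit_odd_succ, Nat.testbit_even_succ; auto; lia.
  - destruct (IH w ltac:(lia)) as [j [H1 [H2 [H3 H4]]]].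
    replace (S (2 * w + 1)) with (2 * S w)%nat by lia.
    exists (S j). split; [|split; [|split]].
    + intros i Hi. destruct i. rewrite Nat.testbit_odd_0, Nat.testbit_even_0; auto.
      rewrite Nat.testbit_odd_succ, Nat.testbit_even_succ by lia. apply H1. lia.
    + rewrite Nat.testbit_odd_succ by lia. auto.
    + rewrite Nat.testbit_even_succ by lia. auto.
    + intros i Hi. destruct i; [lia|]. rewrite Nat.testbit_odd_succ, Nat.testbit_even_succ by lia. apply H4. lia.
Qed.

Lemma testbit_big v n : (v < 2 ^ n)%nat -> Nat.testbit v n = false.
Proof.
  intro H. destruct v. apply Nat.bits_0. apply Nat.bits_above_log2. apply Nat.log2_lt_pow2; lia.
Qed.

End M_K.
Import M_K.

Module M_K2.
Import ListNotations.
Local Open Scope Z_scope.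

Lemma model_mkM al : is_model T (mkM al).
Proof.
  apply model_T. split; [constructor; exact (None, 0)|split].
  - intro x. exists (shiftE x 1). simpl. reflexivity.
  - intros x y z H1 H2. simpl in H1, H2. unfold Srel in *. congruence.
Qed.

Lemma ex_elt : exists x : OmE tt, True.
Proof. exists (None, 0). auto. Qed.

Section Step.
Variables (B : Z) (v : nat).
Hypothesis HB : 0 <= B.
Hypothesis Hv : (v < 2 ^ Z.to_nat B)%nat.

Lemma Estep : mer_rel (fun psi => In psi tau) (mkM (Lam B v true)) (mkM (Lam B (S v) false)).
Proof.
  destruct (trail v) as [j [H1 [H2 [H3 H4]]]].
  assert (Hj : (j <= Z.to_nat B)%nat).
  { destruct (Nat.le_gt_cases j (Z.to_nat B)) as [|Hc]; auto.
    pose proof (testbit_big v _ Hv). destruct (H1 _ Hc). congruence. }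
  set (D0 := B - Z.of_nat j).
  set (al := Lam B v true). set (be := Lam B (S v) false).
  assert (P1 : forall z, z < D0 -> al z = be z).
  { intros z Hz. unfold al, be, Lam.
    destruct (Z.ltb_spec z (- B)); auto. destruct (Z.leb_spec z B); [|lia].
    symmetry. apply H4. lia. }
  assert (P2 : al D0 = false /\ be D0 = true).
  { unfold al, be, Lam. destruct (Z.ltb_spec D0 (- B)); [lia|]. destruct (Z.leb_spec D0 B); [|lia].
    replace (Z.to_nat (B - D0)) with j by lia. auto. }
  assert (P3 : forall z, D0 < z -> al z = true /\ be z = false).
  { intros z Hz. unfold al, be, Lam.
    destruct (Z.ltb_spec z (- B)); [lia|]. destruct (Z.leb_spec z B); auto.
    apply H1. lia. }
  assert (HD : forall x : Elt, ~ (lab al x = true <-> lab be x = true) <-> (fst x = None /\ D0 <= snd x)).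
  { intros [[[b i]|] z]; cbn [lab fst snd]. split; [intro H; exfalso; apply H; tauto|intros [H _]; discriminate].
    destruct (Z.lt_trichotomy z D0) as [Hz|[Hz|Hz]].
    - rewrite (P1 z Hz). split; [intro H; exfalso; apply H; tauto|intros [_ H]; lia].
    - subst z. destruct P2 as [-> ->]. split; [intros; split; [reflexivity|lia]|intros _ H; destruct H as [_ H]; discriminate (H eq_refl)].
    - destruct (P3 z Hz) as [-> ->]. split; [intros; split; [reflexivity|lia]|intros _ H; destruct H as [H _]; discriminate (H eq_refl)]. }
  rewrite (tau_sem _ _ ex_elt). split; [|split; [|split]].
  - intros x y. simpl. tauto.
  - intros x y Hxy Hx. unfold DS, PR in *. simpl in *. unfold Srel in Hxy.
    fold al be in Hx |- *. apply HD. apply HD in Hx. subst y. unfold shiftE. destruct Hx as [Hx1 Hx2]. simpl. split; [exact Hx1|lia].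
  - intros x y z Hxy Hyz Hx. unfold DS, SR, PR in *. simpl in *. unfold Srel in *.
    fold al be in Hx |- *. apply HD in Hx. subst y z.
    destruct x as [c w]. unfold shiftE, lab in *. simpl in *. destruct Hx as [-> Hw].
    rewrite (proj1 (P3 (w + 1) ltac:(lia))), (proj1 (P3 (w + 1 + 1) ltac:(lia))). tauto.
  - intros x y z Hxy Hyz Hx Hy. unfold DS, SR, PR in *. simpl in *. unfold Srel in *.
    fold al be in Hx, Hy |- *. rewrite HD in Hx, Hy. subst y z.
    destruct x as [c w]. unfold shiftE, lab in *. simpl in *. destruct Hy as [-> Hw].
    assert (w + 1 = D0) by (destruct (Z.le_gt_cases D0 w); [exfalso; apply Hx; auto|lia]).
    rewrite H. rewrite (proj1 P2), (proj1 (P3 (D0 + 1) ltac:(lia))). split; intros; [discriminate|].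
    exfalso; auto.
Qed.
End Step.

Definition gam : Z -> bool := fun _ => false.
Definition del : Z -> bool := fun z => Z.eqb z 0.

Lemma nonE : ~ mer_rel (fun psi => In psi tau) (mkM gam) (mkM del).
Proof.
  rewrite (tau_sem _ _ ex_elt). intros (_ & H1 & _).
  specialize (H1 (None, 0) (None, 1)). unfold DS, SR, PR in H1. simpl in H1. unfold Srel, shiftE in H1.
  simpl in H1. unfold gam, del in H1. cbn in H1.
  apply H1; [reflexivity| |].
  - intro H. destruct H as [_ H]. discriminate (H eq_refl).
  - tauto.
Qed.

End M_K2.
Import M_K2.

Module M_K3.
Import ListNotations.
Local Open Scope Z_scope.

Theorem NYD : ~ ydlept T (fun psi => In psi tau).
Proof.
  intros [Rs HRs].
  pose proof (HRs OmE (mkM gam) (mkM del) (model_mkM _) (model_mkM _)) as Hgd.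
  assert (Hex : exists phi, Rs phi /\ exists rho, ~ (sat (mkM gam) rho phi <-> sat (mkM del) rho phi)).
  { apply NNPP; intro Hn. apply nonE. apply Hgd. intros phi Hphi rho. apply NNPP; intro H. apply Hn. eauto. }
  destruct Hex as [phi [Hphi [rho Hd]]]. apply Hd.
  pose proof (Bnd_pos phi rho) as HB1.
  set (B := Bnd phi rho) in *.
  assert (HB : 0 <= B) by lia.
  assert (chain : forall n, (n <= 2 ^ Z.to_nat B)%nat ->
     (sat (mkM (Lam B 0 false)) rho phi <-> sat (mkM (Lam B n false)) rho phi)).
  { induction n; intros Hn. tauto. rewrite IHn by lia.
    rewrite (far_mod phi rho (Lam B n false) (Lam B n true)).
    - apply (proj1 (HRs OmE _ _ (model_mkM _) (model_mkM _)) (Estep B n HB ltac:(lia))); auto.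
    - intros z Hz. unfold Lam. destruct (Z.ltb_spec z (- B)); auto. destruct (Z.leb_spec z B); auto. lia. }
  rewrite (far_mod phi rho gam (Lam B 0 false)).
  rewrite (far_mod phi rho del (Lam B (2 ^ Z.to_nat B) false)).
  - apply chain. lia.
  - intros z Hz. unfold Lam, del. fold B in Hz.
    destruct (Z.ltb_spec z (- B)); [lia|]. destruct (Z.leb_spec z B); [|lia].
    rewrite Nat.pow2_bits_eqb.
    destruct (Z.eqb_spec z 0); destruct (Nat.eqb_spec (Z.to_nat B) (Z.to_nat (B - z))); auto; lia.
  - intros z Hz. unfold Lam, gam. fold B in Hz.
    destruct (Z.ltb_spec z (- B)); [lia|]. destruct (Z.leb_spec z B); [|lia].
    rewrite Nat.bits_0. reflexivity.
Qed.

End M_K3.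
Import M_K3.

Theorem mainTheorem6 :
  exists (L : lang) (T : formula L -> Prop) (tau : list (formula (pairL L))),
    theory T /\
    is_MER T (fun psi => In psi tau) /\
    yclept T (fun psi => In psi tau) /\
    ~ ydlept T (fun psi => In psi tau).
Proof.
  exists M_A.L, M_B.T, M_B.tau.
  split; [exact theory_T|split; [exact MER|split; [exact YC|exact NYD]]].
Qed.
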